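(* For all $i,j\in\{1,\dots,n\}$ the following relations hold in $(\mathcal{A}'/\mathrm{II},\diamond)$ (with summation over the repeated index $i$ in the last three): \begin{align*} \overline{\partial_i}\diamond\overline{\gamma^j}-\overline{\gamma^j}\diamond\overline{\partial_i}&=\tfrac1H\,\overline{\gamma_i}\diamond\overline{\partial^j},\\ \overline{\gamma^i}\diamond\overline{\gamma^j}+\overline{\gamma^j}\diamond\overline{\gamma^i}&=2\eta^{ij}\overline1+\tfrac{2}{H+1}\big(\overline{x^j}\diamond\overline{\partial^i}+\overline{x^i}\diamond\overline{\partial^j}\big),\\ \overline{\partial_i}\diamond\overline{x^j}-\overline{x^j}\diamond\overline{\partial_i}&=\delta_i^j\overline1+\tfrac1{2H}\,\overline{\gamma_i}\diamond\overline{\gamma^j}+\tfrac1{H+1}\,\overline{x_i}\diamond\overline{\partial^j},\\ \overline{\gamma^i}\diamond\overline{x^j}-\overline{x^j}\diamond\overline{\gamma^i}&=\tfrac1{H+1}\,\overline{x^i}\diamond\overline{\gamma^j},\\ \overline{x^i}\diamond\overline{\partial_i}&=\big(-\tfrac n2-H\big)\overline1,\\ \overline{\gamma^i}\diamond\overline{\partial_i}&=0,\\ \overline{\gamma_i}\diamond\overline{x^i}&=0. \end{align*}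
   Context: Fix $n\ge1$ and an invertible complex matrix $\eta=(\eta^{ij})$ with $\eta^{ij}=\eta^{ji}$ and inverse $(\eta_{ij})$. $\mathcal{A}=W(2n|n)$ is the associative superalgebra generated by even $x^1,\dots,x^n,\partial_1,\dots,\partial_n$ and odd $\gamma^1,\dots,\gamma^n$ with relations $x^ix^j=x^jx^i$, $\partial_i\partial_j=\partial_j\partial_i$, $\partial_ix^j-x^j\partial_i=\delta_i^j$, $\gamma^i$ commuting with all $x^j,\partial_j$, $\gamma^i\gamma^j+\gamma^j\gamma^i=2\eta^{ij}$. Repeated indices are summed; $x_i=\eta_{ij}x^j$, $\partial^i=\eta^{ij}\partial_j$, $\gamma_i=\eta_{ij}\gamma^j$. Set $X=\frac{\sqrt{-1}}{\sqrt2}\gamma^i\partial_i$, $Y=\frac{\sqrt{-1}}{\sqrt2}\gamma^ix_i$, $H=-\frac12(\partial_ix^i+x^i\partial_i)$, $E=-\frac12\partial^i\partial_i$, $F=\frac12x^ix_i$. Let $\mathcal{A}'$ be the localization of $\mathcal{A}$ at the multiplicative set generated by $\{H+k:k\in\mathbb{Z}\}$, $\mathrm{II}:=Y\mathcal{A}'+F\mathcal{A}'+\mathcal{A}'X+\mathcal{A}'E$, and $\overline a:=a+\mathrm{II}$. Define $\kappa_k(t)=-k/2$ for $k$ even, $\kappa_k(t)=t+\frac{k+1}2$ for $k$ odd, $\varphi_k(t)=\prod_{l=1}^k\frac{(-1)^l}{\kappa_l(t)}$. The diamond product is $\overline a\diamond\overline b:=\sum_{k\ge0}a\varphi_k(H)Y^kX^kb+\mathrm{II}$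 (all but finitely many terms lie in $\mathrm{II}$); it is associative. For a rational function $\phi$ with $\phi(H)\in\mathcal{A}'$ one writes $\phi(H)\,\overline a:=\overline{\phi(H)a}$ $(=\overline{\phi(H)}\diamond\overline a)$, e.g. $\frac1H\overline{a}=\overline{H^{-1}a}$. *)

(* Defs.v *)
(* W(2n|n) and its localization are modelled through an
   arbitrary complex unital algebra B containing elements x^i, d_i (=\partial_i),
   g^i (=\gamma^i) satisfying the defining relations of W(2n|n) and in which
   all H + k (k integer) are invertible. *)
From mathcomp Require Import all_boot all_algebra.
From mathcomp Require Import reals complex.
Set Implicit Arguments.
Unset Strict Implicit.
Unset Printing Implicit Defensive.
Import GRing.Theory Num.Theory.
Local Open Scope ring_scope.

Section WeylClifford.
Variables (R : realType) (n : nat) (eta : 'M[R[i]]_n) (B : unitAlgType R[i]).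
Variables (x d g : 'I_n -> B).

Definition WC_relations : Prop :=
  [/\ forall i j, x i * x j = x j * x i,
      forall i j, d i * d j = d j * d i,
      forall i j, d i * x j - x j * d i = (i == j)%:R,
      forall i j, g i * x j = x j * g i /\ g i * d j = d j * g i
    & forall i j, g i * g j + g j * g i = (2 * eta i j)%:A].

Definition etainv : 'M[R[i]]_n := invmx eta.

(* lowered / raised indices *)
Definition xl (i : 'I_n) : B := \sum_j etainv i j *: x j.
Definition gl (i : 'I_n) : B := \sum_j etainv i j *: g j.
Definition du (i : 'I_n) : B := \sum_j eta i j *: d j.

Definition cXY : R[i] := sqrtC (-1) / sqrtC 2.

Definition X : B := cXY *: \sum_i g i * d i.
Definition Y : B := cXY *: \sum_i g i * xl i.
Definition H : B := - (1 / 2 : R[i]) *: \sum_i (d i * x i + x i * d i).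
Definition E : B := - (1 / 2 : R[i]) *: \sum_i du i * d i.
Definition F : B := (1 / 2 : R[i]) *: \sum_i x i * xl i.

Definition kappaH (l : nat) : B :=
  if odd l then H + ((l.+1)./2)%:R else (- (l%:R / 2 : R[i]))%:A.
Definition phiH (k : nat) : B :=
  \prod_(1 <= l < k.+1) ((-1) ^+ l * (kappaH l)^-1).

Definition inII (u : B) : Prop :=
  exists p q r s : B, u = Y * p + F * q + r * X + s * E.

(* truncation at N of the series a phi_k(H) Y^k X^k b defining abar <> bbar *)
Definition dmd (N : nat) (a b : B) : B :=
  \sum_(k < N) a * phiH k * Y ^+ k * X ^+ k * b.

End WeylClifford.

(* Main.v *)
Require Import Defs.
From mathcomp Require Import all_boot all_algebra.
From mathcomp Require Import reals complex.
From mathcomp Require Import zify.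
Import GRing.Theory Num.Theory.
Local Open Scope ring_scope.

Section Proof.
Variables (R : realType) (n : nat) (eta : 'M[R[i]]_n) (B : unitAlgType R[i]).
Variables (x d g : 'I_n -> B).
Hypotheses (etaS : eta^T = eta) (etaU : eta \in unitmx).
Hypotheses (xx : forall i j, x i * x j = x j * x i)
  (dd : forall i j, d i * d j = d j * d i)
  (dx : forall i j, d i * x j - x j * d i = (i == j)%:R)
  (gxd : forall i j, g i * x j = x j * g i /\ g i * d j = d j * g i)
  (gg : forall i j, g i * g j + g j * g i = (2 * eta i j)%:A).
Hypothesis Hu : forall k : int, H x d + k%:~R \is a GRing.unit.

Local Notation Xo := (X d g).
Local Notation Yo := (Y eta x g).
Local Notation Ho := (H x d).
Local Notation c := (cXY R).
Local Notation ei := (etainv eta).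

Lemma c2 : c * c = - (1/2).
Proof.
by rewrite /cXY -expr2 expr_div_n !sqrtCK mulNr.
Qed.

Lemma c_neq0 : c != 0.
Proof.
rewrite /cXY mulf_neq0 // ?invr_eq0 sqrtC_eq0 //.
by rewrite oppr_eq0 oner_eq0.
by rewrite pnatr_eq0.
Qed.

Lemma eiS : ei^T = ei.
Proof. by rewrite /etainv trmx_inv etaS. Qed.

Lemma eiS' i j : ei i j = ei j i.
Proof. by rewrite -{1}eiS mxE. Qed.

Lemma etaS' i j : eta i j = eta j i.
Proof. by rewrite -{1}etaS mxE. Qed.

Lemma sum_delta (f : 'I_n -> B) j :
  \sum_l ((j == l)%:R : R[i]) *: f l = f j.
Proof.
rewrite (bigD1 j) //= eqxx scale1r big1 ?addr0 // => l /negbTE.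
by rewrite eq_sym => ->; rewrite scale0r.
Qed.

Lemma eta_ei j l : \sum_m eta j m * ei m l = (j == l)%:R.
Proof.
have := congr1 (fun M : 'M[R[i]]_n => M j l) (mulmxV etaU).
by rewrite !mxE => <-.
Qed.

Lemma ei_eta j l : \sum_m ei j m * eta m l = (j == l)%:R.
Proof.
have := congr1 (fun M : 'M[R[i]]_n => M j l) (mulVmx etaU).
by rewrite !mxE => <-.
Qed.

Lemma comp_eta_ei (f : 'I_n -> B) j :
  \sum_m eta j m *: \sum_l ei m l *: f l = f j.
Proof.
have -> : \sum_m eta j m *: \sum_l ei m l *: f l =
   \sum_m \sum_l (eta j m * ei m l) *: f l.
  by apply eq_bigr => m _; rewrite scaler_sumr; apply eq_bigr => l _; rewrite scalerA.
rewrite exchange_big /=.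
by under eq_bigr => l _ do rewrite -scaler_suml eta_ei; rewrite sum_delta.
Qed.


Lemma lin_comm (a : B) (s : 'I_n -> R[i]) (f : 'I_n -> B) (t : 'I_n -> B) :
  (forall l, a * f l = f l * a + t l) ->
  a * (\sum_l s l *: f l) = (\sum_l s l *: f l) * a + \sum_l s l *: t l.
Proof.
move=> h; rewrite mulr_sumr mulr_suml -big_split /=; apply eq_bigr => l _.
by rewrite -scalerAr h scalerDr scalerAl.
Qed.

Lemma lin_commr (a : B) (s : 'I_n -> R[i]) (f : 'I_n -> B) (t : 'I_n -> B) :
  (forall l, f l * a = a * f l + t l) ->
  (\sum_l s l *: f l) * a = a * (\sum_l s l *: f l) + \sum_l s l *: t l.
Proof.
move=> h; rewrite mulr_sumr mulr_suml -big_split /=; apply eq_bigr => l _.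
by rewrite -scalerAl h scalerDr scalerAr.
Qed.

Lemma lin_comm0 (a : B) (s : 'I_n -> R[i]) (f : 'I_n -> B) :
  (forall l, a * f l = f l * a) ->
  a * (\sum_l s l *: f l) = (\sum_l s l *: f l) * a.
Proof.
move=> h; rewrite mulr_sumr mulr_suml; apply eq_bigr => l _.
by rewrite -scalerAr h scalerAl.
Qed.

Lemma gx i j : g i * x j = x j * g i. Proof. by case: (gxd i j). Qed.
Lemma gd i j : g i * d j = d j * g i. Proof. by case: (gxd i j). Qed.

Lemma g_xl i m : g i * xl eta x m = xl eta x m * g i.
Proof. by apply: lin_comm0 => l; apply: gx. Qed.
Lemma x_xl i m : x i * xl eta x m = xl eta x m * x i.
Proof. by apply: lin_comm0 => l; apply: xx. Qed.
Lemma x_gl i m : x i * gl eta g m = gl eta g m * x i.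
Proof. by apply: lin_comm0 => l; rewrite gx. Qed.
Lemma xl_gl i m : xl eta x i * gl eta g m = gl eta g m * xl eta x i.
Proof. by apply: lin_comm0 => l; rewrite -g_xl. Qed.

Lemma dx' i j : d i * x j = x j * d i + (i == j)%:R.
Proof. by rewrite -dx addrC subrK. Qed.

Lemma d_xl i m : d i * xl eta x m = xl eta x m * d i + (ei m i)%:A.
Proof.
rewrite /xl (@lin_comm _ _ _ (fun l => (i == l)%:R)) => [|l]; last exact: dx'.
congr (_ + _); rewrite -(sum_delta (fun l => (ei m l)%:A)).
apply eq_bigr => l _.
case: eqP => [<-|_] /=; first by rewrite scale1r.
by rewrite !mulr0n scale0r scaler0.
Qed.


Lemma lin_mulr (a : B) (s : 'I_n -> R[i]) (f : 'I_n -> B) :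
  (\sum_l s l *: f l) * a = \sum_l s l *: (f l * a).
Proof. by rewrite mulr_suml; apply eq_bigr => l _; rewrite scalerAl. Qed.

Lemma lin_mull (a : B) (s : 'I_n -> R[i]) (f : 'I_n -> B) :
  a * (\sum_l s l *: f l) = \sum_l s l *: (a * f l).
Proof. by rewrite mulr_sumr; apply eq_bigr => l _; rewrite scalerAr. Qed.

Lemma gg' j m : g j * g m = (2 * eta j m)%:A - g m * g j.
Proof. by rewrite -(gg j m) addrK. Qed.

Lemma alg_comm (k : R[i]) (a : B) : k%:A * a = a * k%:A.
Proof. by rewrite mulr_algl mulr_algr. Qed.

Lemma Y1 i : x i * Yo = Yo * x i.
Proof.
rewrite /Y -scalerAr -scalerAl mulr_sumr mulr_suml; congr (_ *: _).
by apply eq_bigr => m _; rewrite mulrA -gx -mulrA x_xl mulrA.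
Qed.

Lemma Y4 i : xl eta x i * Yo = Yo * xl eta x i.
Proof.
rewrite lin_mulr lin_mull; apply eq_bigr => l _; by rewrite Y1.
Qed.

Lemma Y2 j : g j * Yo = - (Yo * g j) + (2 * c) *: x j.
Proof.
rewrite /Y -scalerAr mulr_sumr.
have E m : g j * (g m * xl eta x m) =
   2 *: (eta j m *: xl eta x m) - (g m * xl eta x m) * g j.
  by rewrite mulrA gg' mulrBl mulr_algl scalerA -!mulrA g_xl.
rewrite (eq_bigr _ (fun m _ => E m)) sumrB -scaler_sumr comp_eta_ei -mulr_suml.
by rewrite scalerBr addrC -scalerAl scalerA mulrC.
Qed.

Lemma Y3 i : d i * Yo = Yo * d i + c *: gl eta g i.
Proof.
rewrite /Y -scalerAr -scalerAl -scalerDr; congr (_ *: _).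
have E m : d i * (g m * xl eta x m) =
   (g m * xl eta x m) * d i + ei i m *: g m.
  by rewrite mulrA -gd -mulrA d_xl mulrDr mulrA mulr_algr eiS'.
by rewrite mulr_sumr (eq_bigr _ (fun m _ => E m)) big_split /= mulr_suml.
Qed.

Lemma Y5 i : gl eta g i * Yo = - (Yo * gl eta g i) + (2 * c) *: xl eta x i.
Proof.
rewrite lin_mulr (eq_bigr _ (fun l _ => congr1 _ (Y2 l))).
rewrite lin_mull -sumrN scaler_sumr -big_split /=; apply eq_bigr => l _.
by rewrite scalerDr scalerN !scalerA mulrC.
Qed.

Lemma X1 j : Xo * d j = d j * Xo.
Proof.
rewrite /X -scalerAr -scalerAl mulr_sumr mulr_suml; congr (_ *: _).
by apply eq_bigr => m _; rewrite -mulrA (dd m j) !mulrA (gd m j).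
Qed.

Lemma X4 j : Xo * du eta d j = du eta d j * Xo.
Proof. rewrite lin_mulr lin_mull; apply eq_bigr => l _; by rewrite X1. Qed.

Lemma X2 j : Xo * g j = - (g j * Xo) + (2 * c) *: du eta d j.
Proof.
rewrite /X -scalerAl mulr_suml.
have E m : (g m * d m) * g j =
   2 *: (eta j m *: d m) - g j * (g m * d m).
  by rewrite -mulrA -gd mulrA gg' mulrBl mulr_algl scalerA etaS' -!mulrA.
rewrite (eq_bigr _ (fun m _ => E m)) sumrB -scaler_sumr -mulr_sumr.
by rewrite scalerBr addrC -scalerAr scalerA mulrC.
Qed.

Lemma X3 j : Xo * x j = x j * Xo + c *: g j.
Proof.
rewrite /X -scalerAr -scalerAl -scalerDr; congr (_ *: _).
have E m : (g m * d m) * x j =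
   x j * (g m * d m) + ((m == j)%:R : R[i]) *: g m.
  rewrite -mulrA dx' mulrDr mulrA gx -mulrA; congr (_ + _).
  by rewrite mulr_natr -scaler_nat.
rewrite mulr_suml (eq_bigr _ (fun m _ => E m)) big_split /= mulr_sumr.
congr (_ + _); rewrite -(sum_delta g j); apply eq_bigr => m _; by rewrite eq_sym.
Qed.


Definition S := \sum_m x m * d m.
Local Notation kn := ((n%:R / 2 : R[i])%:A : B).

Lemma HS : Ho = - S - kn.
Proof.
rewrite /H /S.
have E m : d m * x m + x m * d m = 2 *: (x m * d m) + 1 *: 1.
  by rewrite dx' eqxx scale1r scaler_nat mulr2n addrC addrA.
rewrite (eq_bigr _ (fun m _ => E m)) big_split /= -!scaler_sumr sumr_const card_ord.
rewrite scale1r -(scaler_nat n (1:B)) scalerDr !scalerA mulNr mul1r mulVf ?pnatr_eq0 // scaleN1r.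
by rewrite mulNr mulrC scaleNr.
Qed.

Lemma alg_commr (k : R[i]) (a : B) : a * k%:A = k%:A * a.
Proof. by rewrite alg_comm. Qed.

Lemma dS i : d i * S = S * d i + d i.
Proof.
rewrite /S mulr_sumr mulr_suml.
have E m : d i * (x m * d m) = (x m * d m) * d i + ((i == m)%:R : R[i]) *: d m.
  by rewrite mulrA dx' mulrDl -!mulrA dd mulr_natl -scaler_nat.
by rewrite (eq_bigr _ (fun m _ => E m)) big_split /= sum_delta.
Qed.

Lemma xS i : x i * S = S * x i - x i.
Proof.
rewrite /S mulr_sumr mulr_suml.
have E m : x i * (x m * d m) = (x m * d m) * x i - ((m == i)%:R : R[i]) *: x m.
  have xd : x i * d m = d m * x i - (m == i)%:R.
    by rewrite -(dx m i) opprB addrC subrK.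
  by rewrite mulrA xx -mulrA xd mulrBr mulrA mulr_natr -scaler_nat.
rewrite (eq_bigr _ (fun m _ => E m)) sumrB; congr (_ - _).
by rewrite -(sum_delta x i); apply eq_bigr => m _; rewrite eq_sym.
Qed.

Lemma gS i : g i * S = S * g i.
Proof.
rewrite /S mulr_sumr mulr_suml; apply eq_bigr => m _.
by rewrite mulrA gx -mulrA gd mulrA.
Qed.

Lemma dH i : d i * Ho = Ho * d i - d i.
Proof.
by rewrite HS mulrBr mulrBl mulrN mulNr dS alg_commr opprD addrAC.
Qed.

Lemma xH i : x i * Ho = Ho * x i + x i.
Proof.
rewrite HS mulrBr mulrBl mulrN mulNr xS alg_commr opprB.
by rewrite addrC -addrA (addrC (x i)) addrCA.
Qed.

Lemma gH i : g i * Ho = Ho * g i.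
Proof. by rewrite HS mulrBr mulrBl mulrN mulNr gS alg_commr. Qed.

Lemma glH i : gl eta g i * Ho = Ho * gl eta g i.
Proof. by rewrite lin_mulr lin_mull; apply eq_bigr => l _; rewrite gH. Qed.

Lemma I4 : \sum_m x m * gl eta g m = \sum_m g m * xl eta x m.
Proof.
under eq_bigr => m _ do rewrite lin_mull.
under [RHS]eq_bigr => m _ do rewrite lin_mull.
rewrite [RHS]exchange_big /=; apply eq_bigr => a _; apply eq_bigr => b _.
by rewrite eiS' gx.
Qed.

Lemma I5 : \sum_m gl eta g m * x m = \sum_m g m * xl eta x m.
Proof.
under eq_bigr => m _ do rewrite lin_mulr.
under [RHS]eq_bigr => m _ do rewrite lin_mull.
rewrite exchange_big /=; apply eq_bigr => a _; apply eq_bigr => b _.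
by rewrite eiS'.
Qed.

Lemma I6 : \sum_m xl eta x m * g m = \sum_m g m * xl eta x m.
Proof. by apply eq_bigr => m _; rewrite g_xl. Qed.

Lemma SY : S * Yo = Yo * S + Yo.
Proof.
rewrite {1}/S mulr_suml.
have E m : x m * d m * Yo = Yo * (x m * d m) + c *: (x m * gl eta g m).
  by rewrite -mulrA Y3 mulrDr mulrA Y1 -mulrA -scalerAr.
rewrite (eq_bigr _ (fun m _ => E m)) big_split /= -scaler_sumr I4 -mulr_sumr.
by [].
Qed.

Lemma HY : Ho * Yo = Yo * Ho - Yo.
Proof.
rewrite HS mulrBl mulrBr mulNr SY alg_comm mulrN opprD.
by rewrite addrAC.
Qed.


Definition Jm (u : B) := exists p r, u = Yo * p + r * Xo.
Definition eqJ (u v : B) := Jm (u - v).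
Definition TT1 (t : B) := exists t', t * Yo = Yo * t'.
Definition TT (t : B) := forall k, exists w, t * Yo ^+ k = Yo ^+ k * w.

Lemma J0 : Jm 0. Proof. by exists 0, 0; rewrite mulr0 mul0r addr0. Qed.
Lemma JY p : Jm (Yo * p). Proof. by exists p, 0; rewrite mul0r addr0. Qed.
Lemma JX r : Jm (r * Xo). Proof. by exists 0, r; rewrite mulr0 add0r. Qed.
Lemma JD u v : Jm u -> Jm v -> Jm (u + v).
Proof.
move=> [p [r ->]] [p' [r' ->]]; exists (p + p'), (r + r').
by rewrite mulrDr mulrDl addrACA.
Qed.
Lemma JN u : Jm u -> Jm (- u).
Proof. by move=> [p [r ->]]; exists (- p), (- r); rewrite opprD mulrN mulNr. Qed.
Lemma JB u v : Jm u -> Jm v -> Jm (u - v).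
Proof. by move=> hu hv; apply: JD => //; apply: JN. Qed.
Lemma JZ (k : R[i]) u : Jm u -> Jm (k *: u).
Proof.
by move=> [p [r ->]]; exists (k *: p), (k *: r); rewrite scalerDr scalerAr scalerAl.
Qed.
Lemma JM t u : TT1 t -> Jm u -> Jm (t * u).
Proof.
move=> [t' ht] [p [r ->]]; exists (t' * p), (t * r).
by rewrite mulrDr !mulrA ht.
Qed.
Lemma Jsum (I : finType) (F : I -> B) : (forall i, Jm (F i)) -> Jm (\sum_i F i).
Proof.
move=> h; elim/big_ind: _ => //; [exact: J0 | exact: JD].
Qed.
Lemma Jeq u v : Jm u -> v = u -> Jm v. Proof. by move=> h ->. Qed.
Arguments Jeq {u v}.

Lemma J_inII u : Jm u -> inII eta x d g u.
Proof.
move=> [p [r ->]]; exists p, 0, r, 0.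
by rewrite !mulr0 !mul0r !addr0.
Qed.

Arguments JD {u v}. Arguments JN {u}. Arguments JB {u v}. Arguments JZ k {u}. Arguments JM {t u}.
Lemma eqJ_refl u : eqJ u u. Proof. by rewrite /eqJ subrr; exact: J0. Qed.
Lemma eqJ_eq u v : u = v -> eqJ u v. Proof. by move=> ->; exact: eqJ_refl. Qed.
Lemma eqJ_sym u v : eqJ u v -> eqJ v u.
Proof. by rewrite /eqJ => /JN; rewrite opprB. Qed.
Lemma eqJ_trans u v w : eqJ u v -> eqJ v w -> eqJ u w.
Proof.
by rewrite /eqJ => h1 h2; apply: (Jeq (JD h1 h2)); rewrite addrA subrK.
Qed.
Lemma eqJ_add u u' v v' : eqJ u u' -> eqJ v v' -> eqJ (u + v) (u' + v').
Proof.
rewrite /eqJ => h1 h2; apply: (Jeq (JD h1 h2)).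
by rewrite opprD addrACA.
Qed.
Lemma eqJ_opp u u' : eqJ u u' -> eqJ (- u) (- u').
Proof. by rewrite /eqJ => /JN; rewrite opprB opprK addrC. Qed.
Lemma eqJ_sub u u' v v' : eqJ u u' -> eqJ v v' -> eqJ (u - v) (u' - v').
Proof. by move=> h1 h2; apply: eqJ_add => //; apply: eqJ_opp. Qed.
Lemma eqJ_mul t u u' : TT1 t -> eqJ u u' -> eqJ (t * u) (t * u').
Proof. by rewrite /eqJ => ht /(JM ht); rewrite mulrBr. Qed.
Lemma eqJ_scale (k : R[i]) u u' : eqJ u u' -> eqJ (k *: u) (k *: u').
Proof. by rewrite /eqJ => /(JZ k); rewrite scalerBr. Qed.
Lemma eqJ_sum (I : finType) (F G : I -> B) :
  (forall i, eqJ (F i) (G i)) -> eqJ (\sum_i F i) (\sum_i G i).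
Proof.
move=> h; rewrite /eqJ -sumrB; apply: Jsum => i; exact: h.
Qed.
Lemma eqJ_J u : eqJ u 0 -> Jm u.
Proof. by rewrite /eqJ subr0. Qed.
Lemma eqJ_addJ u v : Jm v -> eqJ (u + v) u.
Proof. by move=> h; rewrite /eqJ addrC addKr. Qed.

Arguments eqJ_sym {u v}. Arguments eqJ_trans {u v w}. Arguments eqJ_add {u u' v v'}.
Arguments eqJ_opp {u u'}. Arguments eqJ_sub {u u' v v'}. Arguments eqJ_mul {t u u'}.
Arguments eqJ_scale k {u u'}. Arguments eqJ_sum {I F G}. Arguments eqJ_J {u}.

Lemma TT_TT1 t : TT t -> TT1 t.
Proof. by move=> /(_ 1%N) [w]; rewrite expr1 => h; exists w. Qed.

Lemma TT_comm t : GRing.comm t Yo -> TT t.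
Proof. by move=> h k; exists t; apply: commrX. Qed.

Lemma TT_mul t u : TT t -> TT u -> TT (t * u).
Proof.
move=> ht hu k; have [w hw] := hu k; have [w' hw'] := ht k.
by exists (w' * w); rewrite -mulrA hw !mulrA hw'.
Qed.

Lemma HaY (a : int) : (Ho + a%:~R) * Yo = Yo * (Ho + (a - 1)%:~R).
Proof.
rewrite mulrDl HY mulrDr intrD mulrDr -addrA; congr (_ + _).
by rewrite commr_int mulrN1 addrC.
Qed.

Lemma HaYk (a : int) k : (Ho + a%:~R) * Yo ^+ k = Yo ^+ k * (Ho + (a - k%:Z)%:~R).
Proof.
elim: k a => [|k IH] a; first by rewrite expr0 mul1r mulr1 subr0.
rewrite exprSr mulrA IH -mulrA HaY mulrA; congr (_ * (_ + _%:~R)).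
by lia.
Qed.

Lemma conjV (u a v : B) : u * a = a * v -> u \is a GRing.unit -> v \is a GRing.unit ->
  u^-1 * a = a * v^-1.
Proof.
move=> h uu vu.
by rewrite -[u^-1 * a]mulr1 -(mulrV vu) mulrA -[u^-1 * a * v]mulrA -h mulrA mulVr // mul1r.
Qed.

Lemma TT_Hinv (a : int) : TT ((Ho + a%:~R)^-1).
Proof.
move=> k; exists (Ho + (a - k%:Z)%:~R)^-1; apply: conjV; [exact: HaYk | exact: Hu | exact: Hu].
Qed.


Lemma TT1_Hinv (a : int) : TT1 ((Ho + a%:~R)^-1).
Proof. exact/TT_TT1/TT_Hinv. Qed.

Lemma HU : Ho \is a GRing.unit.
Proof. by have := Hu 0; rewrite addr0. Qed.
Lemma H1U : Ho + 1 \is a GRing.unit.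
Proof. by have := Hu 1. Qed.

Lemma TT1_H : TT1 (Ho^-1).
Proof. by have := TT1_Hinv 0; rewrite addr0. Qed.
Lemma TT1_H1 : TT1 ((Ho + 1)^-1).
Proof. by have := TT1_Hinv 1. Qed.

Lemma TT_phi k : TT (phiH x d k).
Proof.
rewrite /phiH; elim/big_ind: _ => //.
- by apply: TT_comm; rewrite /GRing.comm mul1r mulr1.
- exact: TT_mul.
move=> l _; apply: TT_mul.
  apply: TT_comm; apply/commr_sym; apply: commrX; apply: commrN1.
rewrite /kappaH; case: ifP => _.
  by rewrite -[((l.+1)./2)%:R]/(((l.+1)./2)%:Z%:~R); apply: TT_Hinv.
apply: TT_comm; apply/commr_sym; apply: commrV; by rewrite /GRing.comm alg_comm.
Qed.

Lemma phi0 : phiH x d 0 = 1.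
Proof. by rewrite /phiH big_geq. Qed.

Lemma phi1 : phiH x d 1 = - (Ho + 1)^-1.
Proof. by rewrite /phiH big_nat1 /kappaH /= expr1 mulN1r. Qed.

Lemma phi2 : phiH x d 2 = (Ho + 1)^-1.
Proof.
rewrite /phiH big_nat_recr //= big_nat1 /kappaH /= expr1 mulN1r.
rewrite divff ?pnatr_eq0 // scaleN1r.
by rewrite invrN1 sqrrN expr1n mul1r mulrN1 opprK.
Qed.


Definition term (k : nat) (a b : B) := a * phiH x d k * Yo ^+ k * Xo ^+ k * b.

Definition LY (K : nat) (a : B) := forall k, (K <= k)%N -> exists p, a * Yo ^+ k = Yo * p.
Definition RX (K : nat) (b : B) := forall k, (K <= k)%N -> exists r, Xo ^+ k * b = r * Xo.

Lemma LY0 K : LY K 0. Proof. by move=> k _; exists 0; rewrite mul0r mulr0. Qed.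
Lemma RX0 K : RX K 0. Proof. by move=> k _; exists 0; rewrite mul0r mulr0. Qed.

Lemma LY_step K a p v : a * Yo = Yo * p + v -> LY K v -> LY K.+1 a.
Proof.
move=> h hv [|k] //= hk; have [p' hp'] := hv k hk.
by exists (p * Yo ^+ k + p'); rewrite exprS mulrA h mulrDl -mulrA hp' mulrDr.
Qed.

Lemma RX_step K b r z : Xo * b = r * Xo + z -> RX K z -> RX K.+1 b.
Proof.
move=> h hz [|k] //= hk; have [r' hr'] := hz k hk.
by exists (Xo ^+ k * r + r'); rewrite exprSr -mulrA h mulrDr mulrA hr' mulrDl.
Qed.

Lemma LYZ K (s : R[i]) a : LY K a -> LY K (s *: a).
Proof.
move=> h k hk; have [p hp] := h k hk.
by exists (s *: p); rewrite -scalerAl hp scalerAr.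
Qed.

Lemma RXZ K (s : R[i]) b : RX K b -> RX K (s *: b).
Proof.
move=> h k hk; have [r hr] := h k hk.
by exists (s *: r); rewrite -scalerAr hr scalerAl.
Qed.

Lemma LY_mono K K' a : (K <= K')%N -> LY K a -> LY K' a.
Proof. by move=> hK h k hk; apply: h; apply: leq_trans hk. Qed.

Lemma term_LY k a b : (exists p, a * Yo ^+ k = Yo * p) -> Jm (term k a b).
Proof.
move=> [p hp]; have [w hw] := TT_phi k k.
apply: (Jeq (JY (p * w * Xo ^+ k * b))).
by rewrite /term -(mulrA a (phiH x d k)) hw mulrA hp !mulrA.
Qed.

Lemma term_RX k a b : (exists r, Xo ^+ k * b = r * Xo) -> Jm (term k a b).
Proof.
move=> [r hr]; apply: (Jeq (JX (a * phiH x d k * Yo ^+ k * r))).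
by rewrite /term -mulrA hr !mulrA.
Qed.

Lemma term_red k a b psi v z p r :
  a * phiH x d k = psi * a -> TT1 psi ->
  a * Yo ^+ k = Yo * p + v -> Xo ^+ k * b = r * Xo + z ->
  eqJ (term k a b) (psi * v * z).
Proof.
move=> ha [psi' hpsi] hY hX.
apply: (Jeq (JD (JY (psi' * p * (r * Xo + z))) (JX (psi * v * r)))).
rewrite /term ha -(mulrA psi a) hY -(mulrA _ (Xo ^+ k) b) hX.
rewrite (mulrDr psi) (mulrA psi Yo) hpsi mulrDl (mulrDr (psi * v)) addrA addrK.
by rewrite !mulrA.
Qed.

Lemma dec2Y a p v p' v' : a * Yo = Yo * p + v -> v * Yo = Yo * p' + v' ->
  a * Yo ^+ 2 = Yo * (p * Yo + p') + v'.
Proof. by move=> h1 h2; rewrite expr2 mulrA h1 mulrDl -mulrA h2 mulrDr addrA mulrA. Qed.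

Lemma dec2X b r z r' z' : Xo * b = r * Xo + z -> Xo * z = r' * Xo + z' ->
  Xo ^+ 2 * b = (Xo * r + r') * Xo + z'.
Proof. by move=> h1 h2; rewrite expr2 -mulrA h1 mulrDr mulrA h2 addrA mulrDl. Qed.

Lemma dec1Y a : a * Yo ^+ 1 = a * Yo. Proof. by rewrite expr1. Qed.
Lemma dec1X b : Xo ^+ 1 * b = Xo * b. Proof. by rewrite expr1. Qed.

Lemma term0 a b : term 0 a b = a * b.
Proof. by rewrite /term phi0 !expr0 !mulr1. Qed.

Lemma dmd_split N a b : (3 <= N)%N -> LY 3 a ->
  eqJ (dmd eta x d g N a b) (a * b + term 1 a b + term 2 a b).
Proof.
move=> hN ha; rewrite /dmd -(subnKC hN) big_split_ord /=.
rewrite !big_ord_recl big_ord0 addr0 /=.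
rewrite -/(term 0 a b) -/(term 1 a b) -/(term 2 a b) term0 addrA; apply: eqJ_addJ.
apply: Jsum => i; apply: term_LY; apply: ha; exact: leq_addr.
Qed.


Arguments LY_step {K a p v}. Arguments RX_step {K b r z}. Arguments LYZ {K} s {a}.
Arguments RXZ {K} s {b}. Arguments term_red {k a b psi v z p r}.
Arguments dec2Y {a p v p' v'}. Arguments dec2X {b r z r' z'}.
Arguments term_LY {k a b}. Arguments term_RX {k a b}. 

Lemma Yx i : x i * Yo = Yo * x i + 0. Proof. by rewrite addr0 Y1. Qed.
Lemma Yxl i : xl eta x i * Yo = Yo * xl eta x i + 0. Proof. by rewrite addr0 Y4. Qed.
Lemma Yg j : g j * Yo = Yo * (- g j) + (2 * c) *: x j. Proof. by rewrite Y2 mulrN. Qed.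
Lemma Ygl i : gl eta g i * Yo = Yo * (- gl eta g i) + (2 * c) *: xl eta x i.
Proof. by rewrite Y5 mulrN. Qed.
Lemma Yd i : d i * Yo = Yo * d i + c *: gl eta g i. Proof. exact: Y3. Qed.

Lemma Xd j : Xo * d j = d j * Xo + 0. Proof. by rewrite addr0 X1. Qed.
Lemma Xdu j : Xo * du eta d j = du eta d j * Xo + 0. Proof. by rewrite addr0 X4. Qed.
Lemma Xg j : Xo * g j = (- g j) * Xo + (2 * c) *: du eta d j. Proof. by rewrite X2 mulNr. Qed.
Lemma Xx j : Xo * x j = x j * Xo + c *: g j. Proof. exact: X3. Qed.

Lemma ZY s a p v : a * Yo = Yo * p + v -> (s *: a) * Yo = Yo * (s *: p) + s *: v.
Proof. by move=> h; rewrite -scalerAl h scalerDr scalerAr. Qed.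
Lemma ZX s b r z : Xo * b = r * Xo + z -> Xo * (s *: b) = (s *: r) * Xo + s *: z.
Proof. by move=> h; rewrite -scalerAr h scalerDr scalerAl. Qed.

Lemma LYx i : LY 1 (x i). Proof. exact: (LY_step (Yx i) (LY0 0)). Qed.
Lemma LYxl i : LY 1 (xl eta x i). Proof. exact: (LY_step (Yxl i) (LY0 0)). Qed.
Lemma LYg j : LY 2 (g j). Proof. exact: (LY_step (Yg j) (LYZ _ (LYx j))). Qed.
Lemma LYgl i : LY 2 (gl eta g i). Proof. exact: (LY_step (Ygl i) (LYZ _ (LYxl i))). Qed.
Lemma LYd i : LY 3 (d i). Proof. exact: (LY_step (Yd i) (LYZ _ (LYgl i))). Qed.

Lemma RXd j : RX 1 (d j). Proof. exact: (RX_step (Xd j) (RX0 0)). Qed.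
Lemma RXdu j : RX 1 (du eta d j). Proof. exact: (RX_step (Xdu j) (RX0 0)). Qed.
Lemma RXg j : RX 2 (g j). Proof. exact: (RX_step (Xg j) (RXZ _ (RXdu j))). Qed.

Lemma dHinv i : d i * (Ho + 1)^-1 = Ho^-1 * d i.
Proof.
symmetry; apply: conjV; [|exact: HU|exact: H1U].
by rewrite mulrDr dH mulr1 subrK.
Qed.

Lemma d_phi1 i : d i * phiH x d 1 = (- Ho^-1) * d i.
Proof. by rewrite phi1 mulrN dHinv mulNr. Qed.
Lemma d_phi2 i : d i * phiH x d 2 = Ho^-1 * d i.
Proof. by rewrite phi2 dHinv. Qed.

Lemma gHinv1 i : g i * (Ho + 1)^-1 = (Ho + 1)^-1 * g i.
Proof.
apply: commrV; rewrite /GRing.comm mulrDr mulrDl gH mulr1 mul1r //.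
Qed.
Lemma glHinv1 i : gl eta g i * (Ho + 1)^-1 = (Ho + 1)^-1 * gl eta g i.
Proof.
apply: commrV; rewrite /GRing.comm mulrDr mulrDl glH mulr1 mul1r //.
Qed.

Lemma g_phi1 i : g i * phiH x d 1 = phiH x d 1 * g i.
Proof. by rewrite phi1 mulrN gHinv1 mulNr. Qed.
Lemma gl_phi1 i : gl eta g i * phiH x d 1 = phiH x d 1 * gl eta g i.
Proof. by rewrite phi1 mulrN glHinv1 mulNr. Qed.

Lemma TT1_phi1 : TT1 (phiH x d 1). Proof. exact/TT_TT1/TT_phi. Qed.
Lemma TT1_NH : TT1 (- Ho^-1).
Proof. by have [t ht] := TT1_H; exists (- t); rewrite mulNr ht mulrN. Qed.

Arguments ZY s {a p v}. Arguments ZX s {b r z}.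

Lemma scal2 (psi u w : B) (s1 s2 : R[i]) :
  psi * (s1 *: u) * (s2 *: w) = (s1 * s2) *: (psi * u * w).
Proof. by rewrite -!scalerAr -scalerAl scalerA mulrC. Qed.


Lemma two_half : (2 : R[i]) * (1 / 2) = 1.
Proof. by rewrite mul1r divff // pnatr_eq0. Qed.
Lemma s1 : c * (2 * c) = -1.
Proof. by rewrite mulrCA c2 mulrN two_half. Qed.
Lemma s5 : (2 * c) * c = -1.
Proof. by rewrite mulrC s1. Qed.
Lemma s2 : (2 * c) * (2 * c) = -2.
Proof. by rewrite -mulrA s1 mulrN1. Qed.

Local Notation D N a b := (dmd eta x d g N a b).

Lemma eqJ_of_J u : Jm u -> eqJ u 0. Proof. by rewrite /eqJ subr0. Qed.
Arguments eqJ_of_J {u}.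

Lemma D_of N a b C1 C2 : (3 <= N)%N -> LY 3 a ->
  eqJ (term 1 a b) C1 -> eqJ (term 2 a b) C2 -> eqJ (D N a b) (a * b + C1 + C2).
Proof.
move=> hN ha h1 h2; apply: eqJ_trans (dmd_split N a b hN ha) _.
by apply: eqJ_add => //; apply: eqJ_add => //; apply: eqJ_refl.
Qed.

Lemma D_L1 N a b : (3 <= N)%N -> LY 1 a -> eqJ (D N a b) (a * b).
Proof.
move=> hN ha; rewrite -[a * b]addr0 -[a * b + 0]addr0.
apply: D_of => //; first exact: LY_mono ha.
  by apply/eqJ_of_J/term_LY/ha.
by apply/eqJ_of_J/term_LY/ha.
Qed.

Lemma D_R1 N a b : (3 <= N)%N -> LY 3 a -> RX 1 b -> eqJ (D N a b) (a * b).
Proof.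
move=> hN ha hb; rewrite -[a * b]addr0 -[a * b + 0]addr0.
apply: D_of => //.
  by apply/eqJ_of_J/term_RX/hb.
by apply/eqJ_of_J/term_RX/hb.
Qed.

Lemma Y1' a p v : a * Yo = Yo * p + v -> a * Yo ^+ 1 = Yo * p + v.
Proof. by rewrite expr1. Qed.
Lemma X1' b r z : Xo * b = r * Xo + z -> Xo ^+ 1 * b = r * Xo + z.
Proof. by rewrite expr1. Qed.
Arguments Y1' {a p v}. Arguments X1' {b r z}.

Lemma tA i j : eqJ (term 1 (d i) (g j)) (Ho^-1 * gl eta g i * du eta d j).
Proof.
apply: eqJ_trans (term_red (d_phi1 i) TT1_NH (Y1' (Yd i)) (X1' (Xg j))) _.
by apply: eqJ_eq; rewrite scal2 s1 scaleN1r !mulNr opprK.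
Qed.

Lemma tB i j : eqJ (term 1 (g i) (g j)) (2 *: ((Ho + 1)^-1 * x i * du eta d j)).
Proof.
apply: eqJ_trans (term_red (g_phi1 i) TT1_phi1 (Y1' (Yg i)) (X1' (Xg j))) _.
by apply: eqJ_eq; rewrite scal2 s2 phi1 !mulNr scaleNr scalerN opprK.
Qed.

Lemma tC i j : eqJ (term 1 (d i) (x j)) ((1/2) *: (Ho^-1 * gl eta g i * g j)).
Proof.
apply: eqJ_trans (term_red (d_phi1 i) TT1_NH (Y1' (Yd i)) (X1' (Xx j))) _.
by apply: eqJ_eq; rewrite scal2 c2 !mulNr scaleNr scalerN opprK.
Qed.

Lemma tD i j : eqJ (term 2 (d i) (x j)) (Ho^-1 * xl eta x i * du eta d j).
Proof.
apply: eqJ_trans (term_red (d_phi2 i) TT1_H (dec2Y (Yd i) (ZY c (Ygl i)))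
                    (dec2X (Xx j) (ZX c (Xg j)))) _.
by apply: eqJ_eq; rewrite !scalerA scal2 s1 mulrN1 opprK scale1r.
Qed.

Lemma tE i j : eqJ (term 1 (gl eta g i) (g j)) (2 *: ((Ho + 1)^-1 * xl eta x i * du eta d j)).
Proof.
apply: eqJ_trans (term_red (gl_phi1 i) TT1_phi1 (Y1' (Ygl i)) (X1' (Xg j))) _.
by apply: eqJ_eq; rewrite scal2 s2 phi1 !mulNr scaleNr scalerN opprK.
Qed.

Lemma tF i j : eqJ (term 1 (g i) (x j)) ((Ho + 1)^-1 * x i * g j).
Proof.
apply: eqJ_trans (term_red (g_phi1 i) TT1_phi1 (Y1' (Yg i)) (X1' (Xx j))) _.
by apply: eqJ_eq; rewrite scal2 s5 phi1 !mulNr scaleN1r opprK.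
Qed.

Lemma tG i j : eqJ (term 1 (gl eta g i) (x j)) ((Ho + 1)^-1 * xl eta x i * g j).
Proof.
apply: eqJ_trans (term_red (gl_phi1 i) TT1_phi1 (Y1' (Ygl i)) (X1' (Xx j))) _.
by apply: eqJ_eq; rewrite scal2 s5 phi1 !mulNr scaleN1r opprK.
Qed.


Arguments D_of {N a b C1 C2}. Arguments D_R1 {N a b}. Arguments D_L1 {N a b}.

Lemma LY3 K a : LY K a -> (K <= 3)%N -> LY 3 a.
Proof. by move=> h hK; apply: LY_mono hK h. Qed.
Arguments LY3 {K a}.

Lemma rel1 N i j : (3 <= N)%N ->
  Jm (D N (d i) (g j) - D N (g j) (d i) - Ho^-1 * D N (gl eta g i) (du eta d j)).
Proof.
move=> hN; apply: eqJ_J.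
have h1 := D_of hN (LYd i) (tA i j) (eqJ_of_J (term_RX (RXg j 2 (leqnn 2)))).
have h2 := D_R1 hN (LY3 (LYg j) isT) (RXd i).
have h3 := D_R1 hN (LY3 (LYgl i) isT) (RXdu j).
apply: eqJ_trans (eqJ_sub (eqJ_sub h1 h2) (eqJ_mul TT1_H h3)) _.
by apply: eqJ_eq; rewrite addr0 -(gd j i) mulrA addrAC addrK subrr.
Qed.


Lemma rel4 N i j : (3 <= N)%N ->
  Jm (D N (g i) (x j) - D N (x j) (g i) - (Ho + 1)^-1 * D N (x i) (g j)).
Proof.
move=> hN; apply: eqJ_J.
have h1 := D_of hN (LY3 (LYg i) isT) (tF i j) (eqJ_of_J (term_LY (LYg i 2 (leqnn 2)))).
have h2 := @D_L1 N (x j) (g i) hN (LYx j).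
have h3 := @D_L1 N (x i) (g j) hN (LYx i).
apply: eqJ_trans (eqJ_sub (eqJ_sub h1 h2) (eqJ_mul TT1_H1 h3)) _.
by apply: eqJ_eq; rewrite addr0 gx mulrA addrAC addrK subrr.
Qed.

Lemma rel5 N : (3 <= N)%N ->
  Jm (\sum_i D N (x i) (d i) - ((- (n%:R / 2 : R[i]))%:A - Ho)).
Proof.
move=> hN; apply: eqJ_J.
apply: eqJ_trans (eqJ_sub (eqJ_sum (fun i => @D_L1 N (x i) (d i) hN (LYx i))) (eqJ_refl _)) _.
apply: eqJ_eq; rewrite -/S HS scaleNr.
by rewrite opprB opprK subrK subrr.
Qed.

Lemma rel6 N : (3 <= N)%N -> Jm (\sum_i D N (g i) (d i)).
Proof.
move=> hN; apply: eqJ_J.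
apply: eqJ_trans (eqJ_sum (fun i => D_R1 hN (LY3 (LYg i) isT) (RXd i))) _.
apply: eqJ_of_J; apply: (Jeq (JX (c^-1)%:A)).
by rewrite mulr_algl /X scalerA mulVf ?c_neq0 // scale1r.
Qed.

Lemma rel7 N : (3 <= N)%N -> Jm (\sum_i D N (gl eta g i) (x i)).
Proof.
move=> hN; apply: eqJ_J.
have h i := D_of hN (LY3 (LYgl i) isT) (tG i i) (eqJ_of_J (term_LY (LYgl i 2 (leqnn 2)))).
apply: eqJ_trans (eqJ_sum h) _.
apply: eqJ_of_J.
have E : \sum_m g m * xl eta x m = Yo * (c^-1)%:A.
  by rewrite mulr_algr /Y scalerA mulVf ?c_neq0 // scale1r.
apply: (Jeq (JD (JY (c^-1)%:A) (JM TT1_H1 (JY (c^-1)%:A)))).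
under eq_bigr => m _ do rewrite addr0 -mulrA.
by rewrite -E big_split /= I5 -mulr_sumr I6.
Qed.


Lemma TT1Z (k : R[i]) t : TT1 t -> TT1 (k *: t).
Proof. by move=> [t' h]; exists (k *: t'); rewrite -scalerAl h scalerAr. Qed.

Lemma TT1_2 : TT1 (2%:R : B).
Proof. by exists 2%:R; rewrite mulr_natl mulr_natr. Qed.

Lemma inv2H : (2%:R * Ho)^-1 = (1/2) *: Ho^-1.
Proof.
rewrite mulr_natl -scaler_nat invrZ ?HU ?mul1r // unitfE pnatr_eq0 //.
Qed.

Lemma TT1_2H : TT1 ((2%:R * Ho)^-1).
Proof. by rewrite inv2H; apply: TT1Z; exact: TT1_H. Qed.

Lemma Hsplit : Ho^-1 = Ho^-1 * (Ho + 1)^-1 + (Ho + 1)^-1.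
Proof.
have E : Ho^-1 * (Ho + 1) = Ho^-1 + 1 by rewrite mulrDr mulr1 mulVr ?HU // addrC.
have F : Ho^-1 * (Ho + 1)^-1 + (Ho + 1)^-1 = (Ho^-1 + 1) * (Ho + 1)^-1.
  by rewrite mulrDl mul1r.
by rewrite F -E -mulrA mulrV ?H1U // mulr1.
Qed.

Lemma rel2 N i j : (3 <= N)%N ->
  Jm (D N (g i) (g j) + D N (g j) (g i)
      - ((2 * eta i j)%:A
         + (Ho + 1)^-1 * (2%:R * (D N (x j) (du eta d i) + D N (x i) (du eta d j))))).
Proof.
move=> hN; apply: eqJ_J.
have h1 := D_of hN (LY3 (LYg i) isT) (tB i j) (eqJ_of_J (term_LY (LYg i 2 (leqnn 2)))).
have h2 := D_of hN (LY3 (LYg j) isT) (tB j i) (eqJ_of_J (term_LY (LYg j 2 (leqnn 2)))).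
have h3 := @D_L1 N (x j) (du eta d i) hN (LYx j).
have h4 := @D_L1 N (x i) (du eta d j) hN (LYx i).
apply: eqJ_trans (eqJ_sub (eqJ_add h1 h2)
   (eqJ_add (eqJ_refl _) (eqJ_mul TT1_H1 (eqJ_mul TT1_2 (eqJ_add h3 h4))))) _.
apply: eqJ_eq.
have E : (Ho + 1)^-1 * (2%:R * (x j * du eta d i + x i * du eta d j)) =
   2 *: ((Ho + 1)^-1 * x i * du eta d j) + 2 *: ((Ho + 1)^-1 * x j * du eta d i).
  by rewrite mulr_natl mulrnAr mulrDr !mulrA !scaler_nat -mulrnDl addrC.
by rewrite E !addr0 addrACA gg subrr.
Qed.


Lemma rel3 N i j : (3 <= N)%N ->
  Jm (D N (d i) (x j) - D N (x j) (d i)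
      - ((i == j)%:R
         + (2%:R * Ho)^-1 * D N (gl eta g i) (g j)
         + (Ho + 1)^-1 * D N (xl eta x i) (du eta d j))).
Proof.
move=> hN; apply: eqJ_J.
have h1 := D_of hN (LYd i) (tC i j) (tD i j).
have h2 := @D_L1 N (x j) (d i) hN (LYx j).
have h3 := D_of hN (LY3 (LYgl i) isT) (tE i j) (eqJ_of_J (term_LY (LYgl i 2 (leqnn 2)))).
have h4 := @D_L1 N (xl eta x i) (du eta d j) hN (LYxl i).
apply: eqJ_trans (eqJ_sub (eqJ_sub h1 h2)
   (eqJ_add (eqJ_add (eqJ_refl _) (eqJ_mul TT1_2H h3)) (eqJ_mul TT1_H1 h4))) _.
apply: eqJ_eq.
set P := Ho^-1; set Q := (Ho + 1)^-1; set C := xl eta x i * du eta d j.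
set A := gl eta g i * g j.
have E1 : (2%:R * Ho)^-1 * (A + 2 *: (Q * xl eta x i * du eta d j) + 0)
     = (1/2) *: (P * A) + P * (Q * C).
  rewrite inv2H addr0 mulrDr -scalerAl; congr (_ + _).
  by rewrite -scalerAl -scalerAr scalerA mulrC two_half scale1r !mulrA.
have E2 : P * xl eta x i * du eta d j = P * (Q * C) + Q * C.
  by rewrite -mulrA {1}/P Hsplit mulrDl -mulrA.
rewrite E1 E2 (mulrA P (gl eta g i)) -/A dx'.
set U := x j * d i; set V := (i == j)%:R; set W := (1/2) *: (P * A).
set Z1 := P * (Q * C); set Z2 := Q * C.
apply/eqP; rewrite subr_eq0; apply/eqP.
by rewrite [LHS]addrC -!addrA addKr.
Qed.


Lemma all_rels N : (3 <= N)%N ->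
  [/\ forall i j : 'I_n,
        inII eta x d g
          (D N (d i) (g j) - D N (g j) (d i)
           - Ho^-1 * D N (gl eta g i) (du eta d j)),
      forall i j : 'I_n,
        inII eta x d g
          (D N (g i) (g j) + D N (g j) (g i)
           - ((2 * eta i j)%:A
              + (Ho + 1)^-1 * (2%:R * (D N (x j) (du eta d i) + D N (x i) (du eta d j))))),
      forall i j : 'I_n,
        inII eta x d g
          (D N (d i) (x j) - D N (x j) (d i)
           - ((i == j)%:R
              + (2%:R * Ho)^-1 * D N (gl eta g i) (g j)
              + (Ho + 1)^-1 * D N (xl eta x i) (du eta d j)))
    & forall i j : 'I_n,
        inII eta x d g
          (D N (g i) (x j) - D N (x j) (g i)
           - (Ho + 1)^-1 * D N (x i) (g j))]
  /\ [/\ inII eta x d g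
        (\sum_i D N (x i) (d i) - ((- (n%:R / 2 : R[i]))%:A - Ho)),
      inII eta x d g (\sum_i D N (g i) (d i))
    & inII eta x d g (\sum_i D N (gl eta g i) (x i))].
Proof.
move=> hN; split; split => *; apply: J_inII.
- exact: rel1.
- exact: rel2.
- exact: rel3.
- exact: rel4.
- exact: rel5.
- exact: rel6.
- exact: rel7.
Qed.

End Proof.

Theorem theorem4p2 (R : realType) (n : nat) (eta : 'M[R[i]]_n)
    (B : unitAlgType R[i]) (x d g : 'I_n -> B) :
  eta^T = eta -> eta \in unitmx ->
  WC_relations eta x d g ->
  (forall k : int, H x d + k%:~R \is a GRing.unit) ->
  let Hh := H x d in
  let D := fun N a b => dmd eta x d g N a b in
  exists N0 : nat, forall N : nat, (N0 <= N)%N ->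
  [/\ forall i j : 'I_n,
        inII eta x d g
          (D N (d i) (g j) - D N (g j) (d i)
           - Hh^-1 * D N (gl eta g i) (du eta d j)),
      forall i j : 'I_n,
        inII eta x d g
          (D N (g i) (g j) + D N (g j) (g i)
           - ((2 * eta i j)%:A
              + (Hh + 1)^-1 * (2%:R * (D N (x j) (du eta d i) + D N (x i) (du eta d j))))),
      forall i j : 'I_n,
        inII eta x d g
          (D N (d i) (x j) - D N (x j) (d i)
           - ((i == j)%:R
              + (2%:R * Hh)^-1 * D N (gl eta g i) (g j)
              + (Hh + 1)^-1 * D N (xl eta x i) (du eta d j)))
    & forall i j : 'I_n,
        inII eta x d g
          (D N (g i) (x j) - D N (x j) (g i)
           - (Hh + 1)^-1 * D N (x i) (g j))]
  /\ [/\ inII eta x d g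
        (\sum_i D N (x i) (d i) - ((- (n%:R / 2 : R[i]))%:A - Hh)),
      inII eta x d g (\sum_i D N (g i) (d i))
    & inII eta x d g (\sum_i D N (gl eta g i) (x i))].
Proof.
move=> etaS etaU [xx dd dx gxd gg] Hu Hh D; exists 3%N => N hN.
rewrite /Hh /D /=.
by apply: all_rels.
Qed.
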